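(* For each positive integer $n\ge 4$, there exists a pair of sidigraphs $S,S'$ of order $n$, both strongly connected and both non cycle balanced, which are noncospectral and satisfy $E(S)=E(S')$.
   Context: A sidigraph is a digraph (no loops, at most one arc from $u$ to $v$) with a sign $\pm1$ on each arc; its eigenvalues are those of its adjacency matrix, whose $(i,j)$ entry is the sign of the arc from $v_i$ to $v_j$ if it exists and $0$ otherwise; its spectrum is the multiset of eigenvalues, and two sidigraphs are cospectral if their spectra coincide. A sidigraph is strongly connected if its underlying digraph is. The sign of a directed cycle is the product of its arc signs; a sidigraph is cycle balanced if every directed cycle is positive, non cycle balanced otherwise. The energy of a sidigraph with eigenvalues $z_1,\dots,z_n$ is $E(S)=\sum_{j=1}^n|\Re z_j|$. *)

(* Defs.v *)
From HB Require Import structures.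
From mathcomp Require Import all_boot all_order all_algebra all_field.
Set Implicit Arguments. Unset Strict Implicit. Unset Printing Implicit Defensive.
Import Order.TTheory GRing.Theory Num.Theory.
Local Open Scope ring_scope.

(* A sidigraph on vertex set 'I_n is encoded by its (integer) adjacency
   matrix A : A i j = sign of the arc i -> j if it exists, 0 otherwise.
   Validity: no loops, entries in {-1, 0, 1}. *)
Definition is_sidigraph (n : nat) (A : 'M[int]_n) : Prop :=
  (forall i, A i i = 0) /\ (forall i j, A i j \in [:: -1; 0; 1]).

Definition arc (n : nat) (A : 'M[int]_n) : rel 'I_n := fun i j => A i j != 0.

Definition strongly_connected (n : nat) (A : 'M[int]_n) : Prop :=
  forall i j : 'I_n, connect (arc A) i j.

Definition directed_cycle (n : nat) (A : 'M[int]_n) (c : seq 'I_n) : bool :=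
  [&& c != [::], uniq c & cycle (arc A) c].

Definition cycle_sign (n : nat) (A : 'M[int]_n) (c : seq 'I_n) : int :=
  \prod_(p <- zip c (rot 1 c)) A p.1 p.2.

Definition cycle_balanced (n : nat) (A : 'M[int]_n) : Prop :=
  forall c, directed_cycle A c -> cycle_sign A c = 1.

Definition adjC (n : nat) (A : 'M[int]_n) : 'M[algC]_n := map_mx intr A.

(* spectrum: the multiset (as a seq, up to permutation) of the roots of the
   characteristic polynomial, i.e. eigenvalues with algebraic multiplicity *)
Definition spectrum (n : nat) (A : 'M[int]_n) : seq algC :=
  sval (closed_field_poly_normal (char_poly (adjC A))).

Definition cospectral (n : nat) (A B : 'M[int]_n) : Prop :=
  perm_eq (spectrum A) (spectrum B).

Definition energy (n : nat) (A : 'M[int]_n) : algC :=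
  \sum_(z <- spectrum A) `|'Re z|.

(* Main.v *)
Require Import Defs.
From HB Require Import structures.
From mathcomp Require Import all_boot all_order all_algebra all_field.
From mathcomp Require Import ring zify.
Import Order.TTheory GRing.Theory Num.Theory.
Local Open Scope ring_scope.

Definition hub (k : nat) {n : nat} (i : 'I_n) : bool := (i < k)%N.

Definition Mk (n k : nat) : 'M[int]_n :=
  \matrix_(i, j) (if hub k i && ~~ hub k j then 1
                  else if hub k j && ~~ hub k i then -1 else 0).

Lemma Mk_skew n k i j : Mk n k j i = - Mk n k i j.
Proof. by rewrite !mxE; case: (hub k i); case: (hub k j). Qed.

Lemma Mk_sd n k : is_sidigraph (Mk n k).
Proof.
split => [i|i j]; rewrite mxE; first by case: (hub k i).
by case: (hub k i); case: (hub k j); rewrite /= !inE.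
Qed.

Lemma arc_Mk n k i j : Defs.arc (Mk n k) i j = (hub k i != hub k j).
Proof. by rewrite /Defs.arc mxE; case: (hub k i); case: (hub k j). Qed.

Lemma Mk_sc n k (hk0 : (0 < k)%N) (hkn : (k < n)%N) : strongly_connected (Mk n k).
Proof.
move=> i j.
pose i0 : 'I_n := Ordinal (ltn_trans hk0 hkn).
pose ik : 'I_n := Ordinal hkn.
have h0 : hub k i0 by [].
have hk' : hub k ik = false by rewrite /hub /= ltnn.
pose m := if hub k i then ik else i0.
have him : Defs.arc (Mk n k) i m by rewrite arc_Mk /m; case: (hub k i); rewrite ?hk' ?h0.
case E: (hub k i == hub k j).
  apply: connect_trans (connect1 him) (connect1 _).
  by rewrite arc_Mk -(eqP E) /m; case: (hub k i); rewrite ?hk' ?h0.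
by apply: connect1; rewrite arc_Mk E.
Qed.

Lemma Mk_nb n k (hk0 : (0 < k)%N) (hkn : (k < n)%N) : ~ cycle_balanced (Mk n k).
Proof.
move=> H.
pose i0 : 'I_n := Ordinal (ltn_trans hk0 hkn).
pose ik : 'I_n := Ordinal hkn.
have h0 : hub k i0 by [].
have hk' : hub k ik = false by rewrite /hub /= ltnn.
have := H [:: i0; ik].
have dc : directed_cycle (Mk n k) [:: i0; ik].
  rewrite /directed_cycle /= !arc_Mk h0 hk' /= andbT inE.
  rewrite ?andbT; apply/eqP => /(congr1 val) /= E; by move: (hk0); rewrite -E.
move=> /(_ dc).
rewrite /cycle_sign /= !big_cons big_nil !mxE h0 hk' /=.
by [].
Qed.

Lemma spec_eig n (A : 'M[int]_n) z : (z \in spectrum A) = eigenvalue (adjC A) z.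
Proof.
rewrite /spectrum; case: closed_field_poly_normal => r /= hr.
by rewrite eigenvalue_root_char hr (monicP (char_poly_monic _)) scale1r root_prod_XsubC.
Qed.

Lemma skew_re n (A : 'M[int]_n) (hA : forall i j, A j i = - A i j) z (v : 'rV[algC]_n) :
  v *m adjC A = z *: v -> v != 0 -> 'Re z = 0.
Proof.
move=> hv v0.
have E j : \sum_i v 0 i * (A i j)%:~R = z * v 0 j.
  move/(congr1 (fun m : 'rV[algC]_n => m 0 j)): hv; rewrite /= !mxE => <-.
  by apply: eq_bigr => i _; rewrite mxE.
pose N := \sum_i v 0 i * (v 0 i)^*.
have X1 : \sum_i \sum_j v 0 i * (A i j)%:~R * (v 0 j)^* = z * N.
  rewrite exchange_big /= mulr_sumr; apply: eq_bigr => j _.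
  by rewrite -mulr_suml E mulrA.
have X2 : \sum_i \sum_j v 0 i * (A i j)%:~R * (v 0 j)^* = - z^* * N.
  rewrite mulr_sumr; apply: eq_bigr => i _.
  have C : (z * v 0 i)^* = \sum_j (v 0 j)^* * (A j i)%:~R.
    by rewrite -E rmorph_sum; apply: eq_bigr => j _; rewrite rmorphM /= rmorph_int.
  under eq_bigr do rewrite -mulrA.
  rewrite -mulr_sumr.
  have -> : \sum_j (A i j)%:~R * (v 0 j)^* = - (z * v 0 i)^*.
    rewrite C -sumrN; apply: eq_bigr => j _.
    by rewrite hA mulrNz mulNr mulrC.
  rewrite rmorphM /=; ring.
have N0 : N != 0.
  apply: contra v0 => /eqP N0; apply/eqP/rowP => i; rewrite mxE.
  have := @psumr_eq0P _ _ xpredT (fun i => v 0 i * (v 0 i)^*) _ N0 i isT.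
  move=> /= h; apply/eqP; rewrite -normr_eq0 -sqrf_eq0 normCK h //.
  by move=> i' _; rewrite -normCK exprn_ge0.
have : (z + z^*) * N = 0 by rewrite mulrDl -X1 X2 mulNr addNr.
move/eqP; rewrite mulf_eq0 (negbTE N0) orbF => /eqP H.
by rewrite ReE H mul0r.
Qed.

Lemma energy_skew n (A : 'M[int]_n) (hA : forall i j, A j i = - A i j) : energy A = 0.
Proof.
rewrite /energy big1_seq // => z /andP[_]; rewrite spec_eig => /eigenvalueP[v hv v0].
by rewrite (@skew_re _ _ hA _ _ hv v0) normr0.
Qed.

Lemma cnt_hub n k (c : algC) : (k <= n)%N ->
  \sum_(i < n) (if (i < k)%N then c else 0) = c *+ k.
Proof.
move=> hk.
rewrite -(big_mkord xpredT (fun i => if (i < k)%N then c else 0)).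
rewrite (big_cat_nat (leq0n k) hk) /=.
rewrite (@big1_seq _ _ _ _ (index_iota k n)); last first.
  by move=> i /andP[_]; rewrite mem_index_iota => /andP[hi _]; rewrite ltnNge hi.
rewrite addr0; transitivity (\sum_(0 <= i < k) c); last by rewrite sumr_const_nat subn0.
by apply: eq_big_nat => i /andP[_ ->].
Qed.

Lemma cnt_nhub n k (c : algC) : (k <= n)%N ->
  \sum_(i < n) (if ~~ (i < k)%N then c else 0) = c *+ (n - k).
Proof.
move=> hk.
rewrite -(big_mkord xpredT (fun i => if ~~ (i < k)%N then c else 0)).
rewrite (big_cat_nat (leq0n k) hk) /=.
rewrite (@big1_seq _ _ _ _ (index_iota 0 k)); last first.
  by move=> i /andP[_]; rewrite mem_index_iota => /andP[_ ->].
rewrite add0r; transitivity (\sum_(k <= i < n) c); last by rewrite sumr_const_nat.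
by apply: eq_big_nat => i /andP[hi _]; rewrite ltnNge hi.
Qed.

Definition sS {n} k (v : 'rV[algC]_n) := \sum_i (if hub k i then v 0 i else 0).
Definition tS {n} k (v : 'rV[algC]_n) := \sum_i (if ~~ hub k i then v 0 i else 0).

Lemma Mk_entry n k (v : 'rV[algC]_n) j :
  (v *m adjC (Mk n k)) 0 j = if hub k j then - tS k v else sS k v.
Proof.
rewrite mxE /tS /sS; case hj: (hub k j).
  rewrite -sumrN; apply: eq_bigr => i _; rewrite !mxE hj /=.
  by case: (hub k i); rewrite /= ?mulr0 ?oppr0 // mulrNz mulr1z mulrN1.
apply: eq_bigr => i _; rewrite !mxE hj /= andbT.
by case: (hub k i); rewrite /= ?mulr0 // mulr1z mulr1.
Qed.

Lemma Mk_eig n k (hk : (k <= n)%N) z (v : 'rV[algC]_n) :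
  v *m adjC (Mk n k) = z *: v -> v != 0 ->
  z = 0 \/ z ^+ 2 = - (k * (n - k))%:R.
Proof.
move=> hv v0.
have E j : z * v 0 j = if hub k j then - tS k v else sS k v.
  by rewrite -Mk_entry hv mxE.
have zs : z * sS k v = - tS k v *+ k.
  rewrite /sS mulr_sumr -(@cnt_hub n k _ hk); apply: eq_bigr => i _.
  rewrite /hub in E *; case hi: (i < k)%N; last by rewrite mulr0.
  by rewrite E /hub hi.
have zt : z * tS k v = sS k v *+ (n - k).
  rewrite /tS mulr_sumr -(@cnt_nhub n k _ hk); apply: eq_bigr => i _.
  rewrite /hub in E *; case hi: (i < k)%N; first by rewrite mulr0.
  by rewrite /= E /hub hi.
have [->|z0] := eqVneq z 0; first by left.
right.
have [s0|s0] := eqVneq (sS k v) 0.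
  exfalso; move: zt; rewrite s0 mul0rn => /eqP; rewrite mulf_eq0 (negbTE z0) /= => /eqP t0.
  move/negP: v0; apply; apply/eqP/rowP => j; rewrite mxE.
  have := E j; case: (hub k j); rewrite ?t0 ?s0 ?oppr0 => /eqP;
    by rewrite mulf_eq0 (negbTE z0) => /eqP.
apply: (mulIf s0).
rewrite -mulr_natr in zs; rewrite -mulr_natr in zt.
have -> : z ^+ 2 * sS k v = - ((z * tS k v) * k%:R) by rewrite expr2 -mulrA zs; ring.
by rewrite zt natrM; ring.
Qed.

Lemma Mk2_eig n (hn : (4 <= n)%N) :
  eigenvalue (adjC (Mk n 2)) (sqrtC (- (2 * (n - 2))%:R : algC)).
Proof.
set z := sqrtC _.
have hz : z ^+ 2 = - (2 * (n - 2))%:R by rewrite sqrtCK.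
have h2n : (2 <= n)%N by apply: leq_trans hn.
have h2 : (2%:R : algC) != 0 by rewrite pnatr_eq0.
pose v : 'rV[algC]_n := \row_j (if hub 2 j then z / 2%:R else 1).
apply/eigenvalueP; exists v.
  apply/rowP => j; rewrite Mk_entry [RHS]mxE [in RHS]mxE.
  have -> : tS 2 v = 1 *+ (n - 2).
    rewrite /tS (eq_bigr (fun i : 'I_n => if ~~ (i < 2)%N then 1 else 0)).
      exact: cnt_nhub.
    by move=> i _; rewrite mxE /hub; case: (i < 2)%N.
  have -> : sS 2 v = (z / 2%:R) *+ 2.
    rewrite /sS (eq_bigr (fun i : 'I_n => if (i < 2)%N then z / 2%:R else 0)).
      exact: cnt_hub.
    by move=> i _; rewrite mxE /hub; case: (i < 2)%N.
  case: (hub 2 j).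
    by rewrite mulrA -expr2 hz natrM mulNr mulrAC divff // mul1r.
  by rewrite -mulr_natr mulr1 divfK.
have hn2 : (2 < n)%N by apply: leq_trans hn.
apply/eqP => /rowP/(_ (Ordinal hn2)); rewrite !mxE /hub /= ?ltnn => /eqP.
by rewrite oner_eq0.
Qed.

Theorem theorem4p1 (n : nat) (hn : (4 <= n)%N) :
  exists S S' : 'M[int]_n,
    is_sidigraph S /\ is_sidigraph S' /\
    strongly_connected S /\ strongly_connected S' /\
    ~ cycle_balanced S /\ ~ cycle_balanced S' /\
    ~ cospectral S S' /\ energy S = energy S'.
Proof.
have h1n : (1 < n)%N by apply: leq_trans hn.
have h2n : (2 < n)%N by apply: leq_trans hn.
exists (Mk n 1), (Mk n 2).
split; first exact: Mk_sd.
split; first exact: Mk_sd.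
split; first exact: Mk_sc.
split; first exact: Mk_sc.
split; first exact: Mk_nb.
split; first exact: Mk_nb.
split; last by rewrite !energy_skew //; apply: Mk_skew.
move=> Hp.
have := @Mk2_eig n hn; set z := sqrtC _ => hz.
have hz2 : z ^+ 2 = - (2 * (n - 2))%:R by rewrite sqrtCK.
have : z \in spectrum (Mk n 1) by rewrite (perm_mem Hp) spec_eig.
rewrite spec_eig => /eigenvalueP[v hv v0].
have [z0|] := @Mk_eig n 1 (ltnW h1n) _ _ hv v0.
  move: hz2; rewrite z0 expr0n /= => /eqP; rewrite eq_sym oppr_eq0 pnatr_eq0.
  by rewrite muln_eq0 /= subn_eq0 leqNgt h2n.
rewrite hz2 => /oppr_inj/eqP; rewrite eqr_nat => /eqP.
move: hn; clear; lia.
Qed.
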